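(* Let $P$ be the set of ordered pairs $(x,y)$ of integers with $x\ge y\ge 0$. Let $Q$ be the set of quadruples $(v;r,s;\lambda)$ of integers satisfying $$\lambda(v-1)=r(r-1)+s(s-1),\qquad v=2n+1 \text{ where } n=r+s-\lambda,\qquad v/2\ge r\ge s\ge 0.$$ Then the map $P\to Q$ given by $$v=1+x(x+1)+y(y+1),\quad r=\binom{x+1}{2}+\binom{y}{2},\quad s=\binom{x}{2}+\binom{y+1}{2},\quad \lambda=\binom{x}{2}+\binom{y}{2}$$ is well defined (its values lie in $Q$) and is a bijection from $P$ onto $Q$.
   Context: $Q$ is the set of normalized feasible parameter sets of ''D-optimal'' supplementary difference sets with two base blocks. Binomial coefficients are the usual ones, with $\binom{k}{2}=k(k-1)/2$ (so $\binom{0}{2}=\binom{1}{2}=0$). *)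

(* Defs.v *)
From Stdlib Require Import ZArith Lia.
Open Scope Z_scope.

(* binom2 k = C(k,2) = k(k-1)/2 (exact division; binom2 0 = binom2 1 = 0). *)
Definition binom2 (k : Z) : Z := k * (k - 1) / 2.

Definition inP (p : Z * Z) : Prop :=
  let '(x, y) := p in x >= y /\ y >= 0.

Definition inQ (q : Z * Z * Z * Z) : Prop :=
  let '(v, r, s, l) := q in
  l * (v - 1) = r * (r - 1) + s * (s - 1) /\
  v = 2 * (r + s - l) + 1 /\
  2 * r <= v /\ r >= s /\ s >= 0.

Definition phi (p : Z * Z) : Z * Z * Z * Z :=
  let '(x, y) := p in
  (1 + x * (x + 1) + y * (y + 1),
   binom2 (x + 1) + binom2 y,
   binom2 x + binom2 (y + 1),
   binom2 x + binom2 y).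

(* Main.v *)
Require Import Defs.
From Stdlib Require Import ZArith Lia.
Open Scope Z_scope.

Lemma binom2_spec k : 2 * binom2 k = k * (k - 1).
Proof.
  unfold binom2. assert (Z.even (k * (k-1)) = true).
  { rewrite Z.even_mul. destruct (Z.even k) eqn:E; auto.
    rewrite Z.even_sub, E. reflexivity. }
  apply Z.even_spec in H. destruct H as [m Hm]. rewrite Hm.
  rewrite (Z.mul_comm 2 m), Z.div_mul by lia. lia.
Qed.

Lemma key (x y R S L : Z) :
  2 * R = (x+1)*x + y*(y-1) -> 2 * S = x*(x-1) + (y+1)*y ->
  2 * L = x*(x-1) + y*(y-1) ->
  L * (1 + x*(x+1) + y*(y+1) - 1) = R*(R-1) + S*(S-1).
Proof.
  intros HR HS HL. apply (Z.mul_reg_l _ _ 4); [lia|].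
  replace (4 * (L * (1 + x*(x+1) + y*(y+1) - 1)))
    with ((2*L) * (2*(x*(x+1) + y*(y+1)))) by ring.
  replace (4 * (R*(R-1) + S*(S-1))) with ((2*R)*(2*R-2) + (2*S)*(2*S-2)) by ring.
  rewrite HR, HS, HL. ring.
Qed.

Theorem proposition1 :
  (forall p, inP p -> inQ (phi p)) /\
  (forall p1 p2, inP p1 -> inP p2 -> phi p1 = phi p2 -> p1 = p2) /\
  (forall q, inQ q -> exists p, inP p /\ phi p = q).
Proof.
  split; [|split].
  - intros [x y] [H1 H2]. cbn [phi inQ].
    pose proof (binom2_spec (x+1)). pose proof (binom2_spec x).
    pose proof (binom2_spec y). pose proof (binom2_spec (y+1)).
    repeat split.
    + apply key; lia.
    + lia.
    + nia.
    + lia.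
    + nia.
  - intros [x1 y1] [x2 y2] _ _ H. cbn [phi] in H. inversion H.
    pose proof (binom2_spec (x1+1)). pose proof (binom2_spec x1).
    pose proof (binom2_spec y1). pose proof (binom2_spec (y1+1)).
    pose proof (binom2_spec (x2+1)). pose proof (binom2_spec x2).
    pose proof (binom2_spec y2). pose proof (binom2_spec (y2+1)).
    f_equal; lia.
  - intros [[[v r] s] l] (H1 & H2 & H3 & H4 & H5).
    exists (r + s - l - s, r + s - l - r). split.
    + cbn [phi inP inQ]. lia.
    + cbn [phi inP inQ].
      set (x := r + s - l - s). set (y := r + s - l - r).
      pose proof (binom2_spec (x+1)). pose proof (binom2_spec x).
      pose proof (binom2_spec y). pose proof (binom2_spec (y+1)).
      subst x y. subst v. f_equal; [f_equal; [f_equal|]|]; nia.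
Qed.
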